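(* Let $q$ be a prime power and let $\{P_i\}$ be an infinite family of toric codes over $\mathbb{F}_q$, with $P_i\subseteq[0,q-2]^{n_i}$. If $\{L(P_i)\}$ is unbounded, then $\delta(P_i)\to0$ as $i\to\infty$.
   Context: For an integral convex polytope $P\subseteq[0,q-2]^n$: $\mathcal{L}_P=\mathrm{span}_{\mathbb{F}_q}\{x^p: p\in P\cap\mathbb{Z}^n\}$, $N(P)=\max_{0\neq f\in\mathcal{L}_P}|Z(f)|$ with $Z(f)$ the zero set of $f$ in $(\mathbb{F}_q^\times)^n$, $\delta(P)=\big((q-1)^n-N(P)\big)/(q-1)^n$, and $R(P)=|P\cap\mathbb{Z}^n|/(q-1)^n$. A sequence of nonempty integral convex polytopes $P_i\subseteq[0,q-2]^{n_i}$ is an infinite family of toric codes if $n_i\to\infty$ and $\delta(P_i)\to\delta$, $R(P_i)\to R$ for some $\delta,R\in[0,1]$. The Minkowski length $\ell(P)$ of a lattice polytope is the largest number of summands in a decomposition $P=P_1+\dots+P_\ell$ (Minkowski sum) into lattice polytopes of positive dimension ($\ell=0$ for a point); the full Minkowski length is $L(P)=\max\{\ell(Q):Q\subseteq P\text{ a lattice polytope}\}$. *)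

(* Defs.v *)
From HB Require Import structures.
From mathcomp Require Import all_boot all_order all_algebra.
From mathcomp Require Import all_classical all_reals all_analysis.
From mathcomp Require Import Rstruct Rstruct_topology.
From Stdlib Require Import ClassicalEpsilon.

Set Implicit Arguments.
Unset Strict Implicit.
Unset Printing Implicit Defensive.

Import Order.TTheory GRing.Theory Num.Theory.
Local Open Scope classical_set_scope.
Local Open Scope ring_scope.

Definition ptope (n : nat) := 'rV[rat]_n -> Prop.

Definition ratv n (v : 'rV[int]_n) : 'rV[rat]_n := map_mx (fun z : int => z%:~R) v.

Definition inconv n (V : seq 'rV[int]_n) (x : 'rV[rat]_n) : Prop :=
  exists w : 'I_(size V) -> rat,
    (forall i, 0 <= w i) /\ \sum_i w i = 1 /\
    x = \sum_i w i *: ratv (nth 0 V i).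

Definition lattice_polytope n (P : ptope n) : Prop :=
  exists V : seq 'rV[int]_n, V != [::] /\ forall x, P x <-> inconv V x.

Definition pos_dim n (P : ptope n) : Prop :=
  exists x y, P x /\ P y /\ x != y.

Fixpoint msum n (Ps : seq (ptope n)) : ptope n :=
  match Ps with
  | [::] => fun x => x = 0
  | P :: Ps' => fun x => exists y z, P y /\ msum Ps' z /\ x = y + z
  end.

Definition mink_decomp n (P : ptope n) (l : nat) : Prop :=
  exists Ps : seq (ptope n), size Ps = l /\
    (forall Q, List.In Q Ps -> lattice_polytope Q /\ pos_dim Q) /\
    (forall x, P x <-> msum Ps x).

(* Minkowski length: largest l with such a decomposition (0 for a point). *)
Definition is_mink_length n (P : ptope n) (m : nat) : Prop :=
  (m = 0%N \/ mink_decomp P m) /\ (forall l, mink_decomp P l -> (l <= m)%N).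

Definition mink_length n (P : ptope n) : nat :=
  epsilon (inhabits 0%N) (is_mink_length P).

Definition is_full_mink_length n (P : ptope n) (m : nat) : Prop :=
  (exists Q : ptope n, lattice_polytope Q /\ (forall x, Q x -> P x) /\
      mink_length Q = m) /\
  (forall Q : ptope n, lattice_polytope Q -> (forall x, Q x -> P x) ->
      (mink_length Q <= m)%N).

Definition full_mink_length n (P : ptope n) : nat :=
  epsilon (inhabits 0%N) (is_full_mink_length P).

Definition in_box (F : finFieldType) n (P : ptope n) : Prop :=
  forall x, P x -> forall j, 0 <= x 0 j /\ x 0 j <= (#|F| - 2)%N%:R.

(* integer points of [0,q-2]^n *)
Notation boxpt F n := {ffun 'I_n -> 'I_(#|F|.-1)}.

Definition boxv (F : finFieldType) n (y : boxpt F n) : 'rV[rat]_n :=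
  \row_j ((y j : nat)%:R).

(* P ∩ Z^n (for P inside the box) *)
Definition latpts (F : finFieldType) n (P : ptope n) : {set boxpt F n} :=
  [set y | `[< P (boxv y) >]].

(* the element f = sum_{p in P ∩ Z^n} c_p x^p of L_P, evaluated at x *)
Definition toric_eval (F : finFieldType) n (P : ptope n)
    (c : {ffun boxpt F n -> F}) (x : {ffun 'I_n -> F}) : F :=
  \sum_(y in latpts F P) c y * \prod_(j < n) x j ^+ (y j : nat).

Definition nzeros (F : finFieldType) n (P : ptope n) (c : {ffun boxpt F n -> F}) : nat :=
  #|[set x : {ffun 'I_n -> F} | [forall j, x j != 0] && (toric_eval P c x == 0)]|.

Definition Nmax (F : finFieldType) n (P : ptope n) : nat :=
  \max_(c : {ffun boxpt F n -> F} | [exists y in latpts F P, c y != 0]) nzeros P c.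

Definition delta (F : finFieldType) n (P : ptope n) : Rdefinitions.R :=
  (((#|F|.-1) ^ n)%N%:R - (Nmax F P)%:R) / ((#|F|.-1) ^ n)%N%:R.

Definition rate (F : finFieldType) n (P : ptope n) : Rdefinitions.R :=
  (#|latpts F P|)%:R / ((#|F|.-1) ^ n)%N%:R.

Definition toric_family (F : finFieldType) (n : nat -> nat)
    (P : forall i, ptope (n i)) : Prop :=
  (forall i, lattice_polytope (P i) /\ in_box F (P i)) /\
  (forall B : nat, exists N : nat, forall i, (N <= i)%N -> (B <= n i)%N) /\
  exists d r : Rdefinitions.R, (0 <= d <= 1) /\ (0 <= r <= 1) /\
    ((fun i => delta F (P i)) @ \oo --> d) /\
    ((fun i => rate F (P i)) @ \oo --> r).

(* Main.v *)
Require Import Defs.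
From HB Require Import structures.
From mathcomp Require Import all_boot all_order all_algebra.
From mathcomp Require Import all_classical all_reals all_analysis.
From mathcomp Require Import Rstruct Rstruct_topology.
From Stdlib Require Import ClassicalEpsilon.
Import Order.TTheory GRing.Theory Num.Theory.
Local Open Scope ring_scope.
Set Implicit Arguments.
Unset Strict Implicit.
Unset Printing Implicit Defensive.
Lemma bounded_max (Pr : nat -> Prop) (D : nat) :
  (exists k, Pr k) -> (forall l, Pr l -> (l <= D)%N) ->
  exists m, Pr m /\ forall l, Pr l -> (l <= m)%N.
Proof.
move=> [k Pk]; elim: D => [|D IH] HB.
  by exists 0%N; have := HB _ Pk; rewrite leqn0 => /eqP Hk; subst k; split.
case: (classic (Pr D.+1)) => HD; first by exists D.+1.
apply: IH => l Pl; have := HB _ Pl; rewrite leq_eqVlt => /orP[/eqP Hl|//].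
by subst l.
Qed.

Lemma msum_sum n (Ps : seq (ptope n)) m : size Ps = m ->
  forall pts : 'I_m -> 'rV[rat]_n,
  (forall i : 'I_m, nth (fun _ => False) Ps i (pts i)) ->
  Defs.msum Ps (\sum_(i < m) pts i).
Proof.
elim: Ps m => [|Q Ps IH] [|m] //= Hs pts Hp.
  by rewrite big_ord0.
case: Hs => Hs.
exists (pts ord0), (\sum_(i < m) pts (lift ord0 i)).
split; first exact: (Hp ord0).
split; last by rewrite big_ord_recl.
apply: IH => // i; exact: (Hp (lift ord0 i)).
Qed.

Lemma card_fam m (T : finType) (A : 'I_m -> pred T) :
  #|[set f : {ffun 'I_m -> T} | [forall t, f t \in A t]]| = (\prod_(t < m) #|A t|)%N.
Proof.
have -> : #|[set f : {ffun 'I_m -> T} | [forall t, f t \in A t]]| = #|(family A : simpl_pred {ffun 'I_m -> T})|.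
  by apply: eq_card => f; rewrite inE.
by rewrite card_family foldrE big_map big_enum.
Qed.
Lemma inconv_vert n (V : seq 'rV[int]_n) (i : 'I_(size V)) : inconv V (ratv (nth 0 V i)).
Proof.
exists (fun j => (j == i)%:R); split; first by move=> j; rewrite ler0n.
split.
  rewrite (bigD1 i) //= eqxx big1 ?addr0 // => j /negbTE ->; done.
rewrite (bigD1 i) //= eqxx scale1r big1 ?addr0 // => j /negbTE ->; by rewrite scale0r.
Qed.

Lemma lp_two n (Q : ptope n) : lattice_polytope Q -> pos_dim Q ->
  exists a b : 'rV[int]_n, a != b /\ Q (ratv a) /\ Q (ratv b).
Proof.
move=> [V [V0 HV]] [x [y [Qx [Qy xy]]]].
case: (classic (exists i j : 'I_(size V), nth 0 V i != nth 0 V j)) => [[i [j Hij]]|Hno].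
  exists (nth 0 V i), (nth 0 V j); split => //; split; apply/HV; exact: inconv_vert.
have Hall : forall z, Q z -> z = ratv (nth 0 V 0).
  move=> z /HV [w [w0 [w1 ->]]].
  have s0 : (0 < size V)%N by rewrite lt0n size_eq0.
  rewrite (eq_bigr (fun j => w j *: ratv (nth 0 V 0))).
    by rewrite -scaler_suml w1 scale1r.
  move=> j _; congr (_ *: _); congr ratv.
  case: (eqVneq (nth 0 V j) (nth 0 V 0)) => // H; exfalso; apply: Hno.
  by exists j, (Ordinal s0).
by move: xy; rewrite (Hall _ Qx) (Hall _ Qy) eqxx.
Qed.
From mathcomp Require Import zify.
Lemma nth_In_seq T (d : T) (s : seq T) t : (t < size s)%N -> List.In (nth d s t) s.
Proof.
elim: s t => [|x s IH] [|t] //= Ht; first by left.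
by right; apply: IH.
Qed.

Lemma norm_ge1 (a b : int) : a != b -> (1 <= `|a - b|)%R.
Proof. move=> H. have: (a - b != 0) by rewrite subr_eq0. move: (a - b) => z. case: z => [[|k]|k] //= _. Qed.

Definition Pnil n : ptope n := fun _ => False.

Lemma decomp_pts n (Q : ptope n) l : mink_decomp Q l ->
  exists Ps : seq (ptope n), size Ps = l /\ (forall x, Q x <-> Defs.msum Ps x) /\
  exists a b : 'I_l -> 'rV[int]_n, forall t, a t != b t /\
     nth (@Pnil n) Ps t (ratv (a t)) /\ nth (@Pnil n) Ps t (ratv (b t)).
Proof.
move=> [Ps [Hs [HP HQ]]]; exists Ps; split => //; split => //.
have H : forall t : 'I_l, exists p : 'rV[int]_n * 'rV[int]_n, p.1 != p.2 /\
     nth (@Pnil n) Ps t (ratv p.1) /\ nth (@Pnil n) Ps t (ratv p.2).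
  move=> t; have Ht : (t < size Ps)%N by rewrite Hs.
  have [lp pd] := HP _ (nth_In_seq (@Pnil n) Ht).
  have [a [b [ab [Ha Hb]]]] := lp_two lp pd.
  by exists (a, b).
have [f Hf] := fin_all_exists H.
by exists (fun t => (f t).1), (fun t => (f t).2).
Qed.

Lemma decomp_in n (Q : ptope n) l (Ps : seq (ptope n)) (a b : 'I_l -> 'rV[int]_n) :
  size Ps = l -> (forall x, Q x <-> Defs.msum Ps x) ->
  (forall t : 'I_l, nth (@Pnil n) Ps t (ratv (a t)) /\ nth (@Pnil n) Ps t (ratv (b t))) ->
  forall c : 'I_l -> bool, Q (\sum_t ratv (if c t then b t else a t)).
Proof.
move=> Hs HQ Hab c; apply/HQ; apply: msum_sum => // t.
by case: (c t); case: (Hab t).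
Qed.

Lemma ratv_entry n (v : 'rV[int]_n) j : ratv v 0 j = (v 0 j)%:~R.
Proof. by rewrite /ratv mxE. Qed.

Lemma coord_count n (Q : ptope n) (K : nat) l (Ps : seq (ptope n)) (a b : 'I_l -> 'rV[int]_n) :
  (forall x, Q x -> forall j, 0 <= x 0 j <= K%:R) ->
  size Ps = l -> (forall x, Q x <-> Defs.msum Ps x) ->
  (forall t : 'I_l, nth (@Pnil n) Ps t (ratv (a t)) /\ nth (@Pnil n) Ps t (ratv (b t))) ->
  forall j : 'I_n, (\sum_(t < l) (a t 0%R j != b t 0%R j) <= K)%N.
Proof.
move=> HB Hs HQ Hab j.
set X := \sum_t ratv (if (a t 0 j < b t 0 j) then b t else a t).
set Y := \sum_t ratv (if ~~ (a t 0 j < b t 0 j) then b t else a t).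
have HX := HB _ (decomp_in Hs HQ Hab (fun t => (a t 0 j < b t 0 j))) j.
have HY := HB _ (decomp_in Hs HQ Hab (fun t => ~~ (a t 0 j < b t 0 j))) j.
rewrite -/X -/Y in HX HY.
have E : X 0 j - Y 0 j = \sum_t `|(a t 0 j)%:~R - (b t 0 j)%:~R : rat|.
  rewrite /X /Y !summxE -sumrB; apply: eq_bigr => t _.
  rewrite !ratv_entry; case: ltrP => H /=.
    by rewrite ler0_norm ?opprB // subr_le0 ler_int ltW.
  by rewrite ger0_norm // subr_ge0 ler_int.
have : ((\sum_(t < l) (a t 0%R j != b t 0%R j))%:R <= (K%:R : rat)).
  apply: (le_trans (y := X 0 j - Y 0 j)); last first.
    move: HX HY => /andP[_ HX] /andP[HY _]; rewrite lerBDr.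
    by apply: (le_trans HX); rewrite lerDl.
  rewrite E natr_sum; apply: ler_sum => t _.
  case: eqP => [->|/eqP H] /=; first by rewrite normr_ge0.
  by rewrite -intrB -intr_norm (ler_int _ 1) norm_ge1.
by rewrite ler_nat.
Qed.

Lemma decomp_bound n (Q : ptope n) (K : nat) l :
  (forall x, Q x -> forall j, 0 <= x 0 j <= K%:R) -> mink_decomp Q l -> (l <= n * K)%N.
Proof.
move=> HB /decomp_pts [Ps [Hs [HQ [a [b Hab]]]]].
have Hab' : forall t : 'I_l, nth (@Pnil n) Ps t (ratv (a t)) /\ nth (@Pnil n) Ps t (ratv (b t)).
  by move=> t; case: (Hab t) => _ [].
apply: (@leq_trans (\sum_(t < l) \sum_(j < n) (a t 0%R j != b t 0%R j))).
  rewrite -{1}(card_ord l) -sum1_card; apply: leq_sum => t _.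
  case: (Hab t) => ab _.
  have [j Hj] : exists j, a t 0 j != b t 0 j.
    apply/existsP; apply: contraR ab => /existsPn Hn; apply/eqP/rowP => j.
    by have := Hn j; rewrite negbK => /eqP.
  by rewrite (bigD1 j) //= Hj.
rewrite exchange_big /=.
have -> : (n * K = \sum_(j < n) K)%N by rewrite sum_nat_const card_ord.
by apply: leq_sum => j _; apply: (coord_count HB Hs HQ Hab').
Qed.

Definition boxb n (Q : ptope n) (K : nat) := forall x, Q x -> forall j, 0 <= x 0 j <= K%:R.

Lemma mink_length_spec n (Q : ptope n) K : boxb Q K ->
  is_mink_length Q (mink_length Q) /\ (mink_length Q <= n * K)%N.
Proof.
move=> HB.
have Hex : exists m, is_mink_length Q m.
  have [m [Hm1 Hm2]] := @bounded_max (fun l => l = 0%N \/ mink_decomp Q l) (n * K)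
     (ex_intro _ 0%N (or_introl erefl))
     (fun l Hl => match Hl with or_introl e => ltac:(by rewrite e) | or_intror d => decomp_bound HB d end).
  by exists m; split => // l Hl; apply: Hm2; right.
have Hs := epsilon_spec (inhabits 0%N) _ Hex.
split => //; case: Hs => [[E|d] _]; [by rewrite /mink_length E | exact: decomp_bound HB d].
Qed.

Lemma full_spec n (P : ptope n) K : lattice_polytope P -> boxb P K ->
  is_full_mink_length P (full_mink_length P).
Proof.
move=> lpP HB; apply: epsilon_spec.
have [m [Hm1 Hm2]] := @bounded_max
  (fun m => exists Q : ptope n, lattice_polytope Q /\ (forall x, Q x -> P x) /\ mink_length Q = m)
  (n * K) (ex_intro _ _ (ex_intro _ P (conj lpP (conj (fun x h => h) erefl))))
  (fun l Hl => match Hl with ex_intro Q (conj _ (conj sub e)) =>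
     ltac:(rewrite -e; apply: (proj2 (@mink_length_spec n Q K _)); move=> x Qx; exact: HB _ (sub _ Qx)) end).
exists m; split => // Q lQ sQ; apply: Hm2; by exists Q.
Qed.

Lemma full_decomp n (P : ptope n) K B : lattice_polytope P -> boxb P K ->
  (0 < B)%N -> (B <= full_mink_length P)%N ->
  exists Q : ptope n, exists m, (B <= m)%N /\ (forall x, Q x -> P x) /\ mink_decomp Q m.
Proof.
move=> lpP HB B0 HBf.
have [[Q [lQ [sQ eQ]]] _] := full_spec lpP HB.
have [[e|d] _] := proj1 (@mink_length_spec n Q K (fun x Qx => HB _ (sQ _ Qx))).
  by move: HBf; rewrite -eQ e leqn0 => /eqP E; move: B0; rewrite E.
by exists Q, (mink_length Q); split; [rewrite eQ | split].
Qed.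
Definition phi n (s : rat) (z : 'rV[int]_n) : rat := \sum_(j < n) (z 0 j)%:~R * s ^+ j.

Lemma phiD n s (z1 z2 : 'rV[int]_n) : phi s (z1 + z2) = phi s z1 + phi s z2.
Proof. by rewrite /phi -big_split; apply: eq_bigr => j _; rewrite mxE intrD mulrDl. Qed.

Lemma phiB n s (z1 z2 : 'rV[int]_n) : phi s (z1 - z2) = phi s z1 - phi s z2.
Proof. by rewrite /phi -sumrB; apply: eq_bigr => j _; rewrite !mxE intrB mulrBl. Qed.

Lemma phi_sum n s m (z : 'I_m -> 'rV[int]_n) : phi s (\sum_t z t) = \sum_t phi s (z t).
Proof.
elim/big_rec2: _ => [|t y1 y2 _ <-]; last by rewrite phiD.
by rewrite /phi big1 // => j _; rewrite mxE mul0r.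
Qed.

Lemma nonroot (p : {poly rat}) : p != 0 -> exists s : rat, ~~ root p s.
Proof.
move=> p0; case: (classic (exists s : rat, ~~ root p s)) => // Hn.
have H (x : rat) : root p x by apply/negPn/negP => Hr; apply: Hn; exists x.
exfalso.
have Hall : all (root p) [seq i%:R | i <- iota 0 (size p)] by apply/allP => x _; apply: H.
have Hu : uniq [seq i%:R : rat | i <- iota 0 (size p)].
  rewrite map_inj_uniq ?iota_uniq // => i j /eqP; rewrite eqr_nat => /eqP; done.
have := max_poly_roots p0 Hall Hu.
by rewrite size_map size_iota ltnn.
Qed.

Lemma generic_phi n m (a b : 'I_m -> 'rV[int]_n) : (forall t, a t != b t) ->
  exists s, forall t, phi s (a t) != phi s (b t).
Proof.
move=> Hab.
pose p t := \sum_(j < n) ((a t - b t) 0 j)%:~R *: 'X^j : {poly rat}.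
have Hp : forall t, p t != 0.
  move=> t; have : a t - b t != 0 by rewrite subr_eq0.
  apply: contraNneq => /polyP H0; apply/eqP/rowP => j.
  have := H0 j; rewrite coef_sum coef0 (bigD1 j) //= coefZ coefXn eqxx mulr1 big1.
    by rewrite addr0 => /eqP; rewrite intr_eq0 => /eqP ->; rewrite mxE.
  by move=> i Hi; rewrite coefZ coefXn (_ : (j == i :> nat) = false) ?mulr0 // eq_sym; apply/negbTE.
have [s Hs] := nonroot (introT (prodf_neq0 xpredT p) (fun t _ => Hp t)).
exists s => t; rewrite -subr_eq0 -phiB.
move: Hs; rewrite /root horner_prod; apply: contra => /eqP H.
rewrite (bigD1 t) //= horner_sum (eq_bigr (fun i : 'I_n => ((a t - b t) 0 i)%:~R * s ^+ i)).
  by rewrite /phi in H; rewrite H mul0r.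
by move=> i _; rewrite hornerZ hornerXn.
Qed.

Definition Sv m n (hi lo : 'I_m -> 'rV[int]_n) (e : {ffun 'I_m -> bool}) : 'rV[int]_n :=
  \sum_t (if e t then lo t else hi t).

Definition wt (F : finFieldType) m (lam : {ffun 'I_m -> F}) (e : {ffun 'I_m -> bool}) : F :=
  \prod_t (if e t then - lam t else 1).

Definition Rel (F : finFieldType) n m (hi lo : 'I_m -> 'rV[int]_n) (y : boxpt F n)
  (e : {ffun 'I_m -> bool}) : bool := [forall j, ((y j : nat)%:Z == Sv hi lo e 0 j)].

Definition cf (F : finFieldType) n m (hi lo : 'I_m -> 'rV[int]_n) (lam : {ffun 'I_m -> F}) :
  {ffun boxpt F n -> F} := [ffun y => \sum_(e | Rel hi lo y e) wt lam e].

Definition Mz (F : finFieldType) n (x : {ffun 'I_n -> F}) (z : 'rV[int]_n) : F :=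
  \prod_j x j ^ (z 0 j).

Definition toBox k (d : 'I_k) n (z : 'rV[int]_n) : {ffun 'I_n -> 'I_k} :=
  [ffun j => insubd d (absz (z 0 j))].

Lemma toBoxP k (d : 'I_k) n (z : 'rV[int]_n) (y : {ffun 'I_n -> 'I_k}) :
  (forall j, 0 <= z 0 j /\ (absz (z 0%R j) < k)%N) ->
  [forall j, ((y j : nat)%:Z == z 0 j)] = (y == toBox d z).
Proof.
move=> Hz; apply/forallP/eqP => [H|->] .
  apply/ffunP => j; apply: val_inj; rewrite ffunE val_insubd (proj2 (Hz j)).
  by have /eqP <- := H j.
move=> j; rewrite ffunE val_insubd (proj2 (Hz j)) gez0_abs //; exact: (proj1 (Hz j)).
Qed.

Lemma MzD (F : finFieldType) n (x : {ffun 'I_n -> F}) z1 z2 : (forall j, x j != 0) ->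
  Mz x (z1 + z2) = Mz x z1 * Mz x z2.
Proof.
move=> Hx; rewrite /Mz -big_split; apply: eq_bigr => j _ /=.
by rewrite mxE exprzDr // unitfE.
Qed.

Lemma Mz_sum (F : finFieldType) n (x : {ffun 'I_n -> F}) m (z : 'I_m -> 'rV[int]_n) :
  (forall j, x j != 0) -> Mz x (\sum_t z t) = \prod_t Mz x (z t).
Proof.
move=> Hx; elim/big_rec2: _ => [|t y1 y2 _ <-]; last by rewrite MzD.
by rewrite /Mz big1 // => j _; rewrite mxE expr0z.
Qed.

Lemma Mz_neq0 (F : finFieldType) n (x : {ffun 'I_n -> F}) z : (forall j, x j != 0) -> Mz x z != 0.
Proof. by move=> Hx; apply/prodf_neq0 => j _; apply: expfz_neq0. Qed.

Lemma eval_cf (F : finFieldType) n (P : ptope n) m (hi lo : 'I_m -> 'rV[int]_n)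
  (d : 'I_(#|F|.-1)) (lam : {ffun 'I_m -> F}) (x : {ffun 'I_n -> F}) :
  (forall e j, 0 <= Sv hi lo e 0 j /\ (absz (Sv hi lo e 0%R j) < #|F|.-1)%N) ->
  (forall e, toBox d (Sv hi lo e) \in latpts F P) ->
  (forall j, x j != 0) ->
  toric_eval P (cf hi lo lam) x = \prod_t (Mz x (hi t) - lam t * Mz x (lo t)).
Proof.
move=> Hbox Hlat Hx; rewrite /toric_eval /cf.
rewrite (eq_bigr (fun y : boxpt F n => \sum_(e | Rel hi lo y e) wt lam e * \prod_(j < n) x j ^+ y j)); last first.
  by move=> y _; rewrite ffunE big_distrl.
rewrite (exchange_big_dep xpredT) //=.
transitivity (\sum_e wt lam e * Mz x (Sv hi lo e)).
  apply: eq_bigr => e _; rewrite (big_pred1 (toBox d (Sv hi lo e))).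
    congr (_ * _); rewrite /Mz; apply: eq_bigr => j _.
    by rewrite ffunE val_insubd (proj2 (Hbox e j)) exprnP gez0_abs //; case: (Hbox e j).
  move=> y /=; rewrite /Rel (toBoxP d) //.
  by case: eqP => [->|]; rewrite ?Hlat ?andbF.
transitivity (\prod_t \sum_(b : bool) (if b then - lam t * Mz x (lo t) else Mz x (hi t))).
  rewrite bigA_distr_bigA; apply: eq_bigr => e _.
  rewrite Mz_sum // /wt -big_split; apply: eq_bigr => t _ /=.
  by case: (e t); rewrite ?mul1r ?mulNr.
by apply: eq_bigr => t _; rewrite big_bool /= addrC mulNr.
Qed.

Lemma phi_lt n m (hi lo : 'I_m -> 'rV[int]_n) s (e : {ffun 'I_m -> bool}) :
  (forall t, phi s (lo t) < phi s (hi t)) -> e != [ffun=> false] ->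
  phi s (Sv hi lo e) < phi s (Sv hi lo [ffun=> false]).
Proof.
move=> Hphi He.
have [t Ht] : exists t, e t.
  case: (classic (exists t, e t)) => // Hn; case/eqP: He; apply/ffunP => t.
  rewrite ffunE; apply/negP => Ht; apply: Hn; by exists t.
rewrite /Sv !phi_sum (bigD1 t) //= [X in _ < X](bigD1 t) //= Ht ffunE /=.
apply: ltr_leD => //; apply: ler_sum => i _; rewrite ffunE /=.
by case: (e i) => //; apply: ltW.
Qed.

Lemma cf_nz (F : finFieldType) n (P : ptope n) m (hi lo : 'I_m -> 'rV[int]_n) s
  (d : 'I_(#|F|.-1)) (lam : {ffun 'I_m -> F}) :
  (forall t, phi s (lo t) < phi s (hi t)) ->
  (forall e j, 0 <= Sv hi lo e 0 j /\ (absz (Sv hi lo e 0%R j) < #|F|.-1)%N) ->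
  (forall e, toBox d (Sv hi lo e) \in latpts F P) ->
  [exists y in latpts F P, cf hi lo lam y != 0].
Proof.
move=> Hphi Hbox Hlat; set e0 : {ffun 'I_m -> bool} := [ffun=> false].
apply/existsP; exists (toBox d (Sv hi lo e0)); rewrite Hlat /= /cf ffunE (big_pred1 e0).
  by rewrite /wt big1 ?oner_neq0 // => t _; rewrite ffunE.
move=> e /=; rewrite /Rel (toBoxP d) //.
case: (eqVneq e e0) => [->|He]; first by rewrite eqxx.
apply/negbTE; apply/eqP => E.
have E2 : Sv hi lo e = Sv hi lo e0.
  apply/rowP => j.
  have := (toBoxP d (toBox d (Sv hi lo e0)) (Hbox e)); rewrite E eqxx => /forallP /(_ j) /eqP <-.
  have := (toBoxP d (toBox d (Sv hi lo e0)) (Hbox e0)); rewrite eqxx => /forallP /(_ j) /eqP <-.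
  by rewrite E.
by have := phi_lt Hphi He; rewrite -/e0 E2 ltxx.
Qed.

Lemma card_sum (T : finType) (A : {set T}) (p : pred T) :
  #|[set x in A | p x]| = (\sum_(x in A) (p x : nat))%N.
Proof.
rewrite -sum1_card (eq_bigl (fun x => (x \in A) && p x)); last by move=> x; rewrite inE.
rewrite -big_mkcondr /=; apply: eq_bigr => x _; by case: (p x).
Qed.

Lemma card_torus (F : finFieldType) n :
  #|[set x : {ffun 'I_n -> F} | [forall j, x j != 0]]| = (#|F|.-1 ^ n)%N.
Proof.
have := card_fam (fun _ : 'I_n => predC1 (0 : F)).
rewrite prod_nat_const card_ord cardC1 => <-.
by apply: eq_card => x; rewrite !inE.
Qed.

Lemma avg_min (T : finType) (A : {set T}) (f : T -> nat) (a0 : T) : a0 \in A ->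
  exists2 a, a \in A & (f a * #|A| <= \sum_(x in A) f x)%N.
Proof.
move=> Aa0; case: (arg_minnP f Aa0) => a Aa Hmin; exists a => //.
rewrite mulnC -sum_nat_const; apply: leq_sum => x Ax; exact: Hmin.
Qed.

Lemma count_lemma (F : finFieldType) n m (g : {ffun 'I_m -> F} -> {ffun 'I_n -> F} -> bool)
   (u : {ffun 'I_n -> F} -> 'I_m -> F) :
  (forall x : {ffun 'I_n -> F}, [forall j, x j != 0] -> forall t, u x t != 0) ->
  (forall (x : {ffun 'I_n -> F}) (lam : {ffun 'I_m -> F}), [forall j, x j != 0] ->
     g lam x = [forall t, lam t != u x t]) ->
  exists2 lam : {ffun 'I_m -> F}, [forall t, lam t != 0] &
   (#|[set x in [set x : {ffun 'I_n -> F} | [forall j, x j != 0%R]] | g lam x]| * (#|F|.-1 ^ m)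
     <= (#|F|.-1 ^ n) * (#|F|.-1.-1 ^ m))%N.
Proof.
move=> Hu Hg.
set T := [set x : {ffun 'I_n -> F} | [forall j, x j != 0]].
set L := [set lam : {ffun 'I_m -> F} | [forall t, lam t != 0]].
have cL : #|L| = (#|F|.-1 ^ m)%N.
  have := card_fam (fun _ : 'I_m => predC1 (0 : F)).
  rewrite prod_nat_const card_ord cardC1 => <-.
  by apply: eq_card => x; rewrite !inE.
have L1 : [ffun=> 1] \in L by rewrite inE; apply/forallP => t; rewrite ffunE oner_neq0.
have [lam Hl Hmin] := avg_min (fun lam => #|[set x in T | g lam x]|) L1.
exists lam; first by move: Hl; rewrite inE.
rewrite -cL; apply: (leq_trans Hmin).
rewrite (eq_bigr (fun lam => \sum_(x in T) (g lam x : nat))); last by move=> l _; rewrite card_sum.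
rewrite exchange_big /= -card_torus -/T -sum_nat_const; apply: leq_sum => x Tx.
have Tx' : [forall j, x j != 0] by move: Tx; rewrite inE.
rewrite (eq_bigr (fun lam : {ffun 'I_m -> F} => ([forall t, lam t != u x t] : nat))); last by move=> l _; rewrite Hg.
rewrite -card_sum.
have := card_fam (fun t : 'I_m => [pred v : F | (v != 0) && (v != u x t)]).
rewrite (eq_bigr (fun _ => #|F|.-1.-1)); last first.
  move=> t _; have := cardD1 (u x t) (predC1 (0 : F)).
  rewrite cardC1 inE /= (Hu x Tx' t) add1n => ->; rewrite succnK.
  by apply: eq_card => v; rewrite !inE andbC.
rewrite prod_nat_const card_ord => <-.
apply: eq_leq; apply: eq_card => l; rewrite !inE.
apply/andP/forallP => [[/forallP H1 /forallP H2] t|H]; first by rewrite inE /= H1 H2.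
by split; apply/forallP => t; have := H t; rewrite inE /= => /andP[].
Qed.

Lemma card_split (T : finType) (A : {set T}) (p : pred T) :
  (#|[set x in A | p x]| + #|[set x in A | ~~ p x]|)%N = #|A|.
Proof.
rewrite !card_sum -big_split -sum1_card; apply: eq_bigr => x _; by case: (p x).
Qed.

Lemma nzeros_fin (F : finFieldType) n (P : ptope n) c :
  nzeros P c = #|[set x in [set x : {ffun 'I_n -> F} | [forall j, x j != 0]] | toric_eval P c x == 0]|.
Proof.
apply: eq_card => x; rewrite !inE; apply/idP/idP => H.
  by move: H; rewrite in_setE.
by rewrite in_setE.
Qed.

Lemma ratv_sum n m (z : 'I_m -> 'rV[int]_n) : ratv (\sum_t z t) = \sum_t ratv (z t).
Proof. by apply/rowP => j; rewrite !mxE !summxE rmorph_sum; apply: eq_bigr => t _; rewrite mxE. Qed.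

Lemma fac_neq0 (F : fieldType) (A B l : F) : B != 0 -> (A - l * B != 0) = (l != A / B).
Proof.
move=> B0; congr negb; apply/eqP/eqP => [H|->].
  by move/eqP: H; rewrite subr_eq0 => /eqP ->; rewrite mulfK.
by rewrite divfK // subrr.
Qed.

Lemma delta_bound (F : finFieldType) n (P Q : ptope n) m :
  in_box F P -> (forall x, Q x -> P x) -> mink_decomp Q m ->
  delta F P <= (((#|F|.-1.-1)%:R / (#|F|.-1)%:R) ^+ m : Rdefinitions.R).
Proof.
move=> HB sQ /decomp_pts [Ps [Hs [HQ [a [b Hab]]]]].
have [s Hs'] := generic_phi (fun t => proj1 (Hab t)).
pose hi t := if phi s (b t) < phi s (a t) then a t else b t.
pose lo t := if phi s (b t) < phi s (a t) then b t else a t.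
have Hphi : forall t, phi s (lo t) < phi s (hi t).
  move=> t; rewrite /hi /lo; case: (ltrP (phi s (b t)) (phi s (a t))) => // H.
  by rewrite lt_neqAle H andbT; exact: Hs' t.
have Hpts : forall t : 'I_m, nth (@Pnil n) Ps t (ratv (hi t)) /\ nth (@Pnil n) Ps t (ratv (lo t)).
  by move=> t; case: (Hab t) => _ [Ha Hb]; rewrite /hi /lo; case: ifP => _; split.
have HPe : forall e, P (ratv (Sv hi lo e)).
  by move=> e; apply: sQ; rewrite /Sv ratv_sum; apply: (decomp_in Hs HQ Hpts e).
have F2 : (1 < #|F|)%N := card_finNzRing_gt1 F.
have HBx : forall e j, 0 <= Sv hi lo e 0 j /\ (absz (Sv hi lo e 0%R j) < #|F|.-1)%N.
  move=> e j; have [H0 H1] := HB _ (HPe e) j; rewrite ratv_entry ler0z in H0; rewrite ratv_entry in H1.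
  split => //.
  have H2 : (Sv hi lo e 0 j <= (#|F| - 2)%N%:Z).
    by move: H1; rewrite -[X in _ <= X]/(((#|F| - 2)%N%:Z)%:~R : rat) ler_int.
  rewrite -ltz_nat gez0_abs //; lia.
have d0 : (0 < #|F|.-1)%N by lia.
pose d : 'I_(#|F|.-1) := Ordinal d0.
have Hlat : forall e, toBox d (Sv hi lo e) \in latpts F P.
  move=> e; rewrite /latpts inE; apply: asboolT.
  have -> : boxv (toBox d (Sv hi lo e)) = ratv (Sv hi lo e).
    apply/rowP => j; rewrite !mxE ffunE val_insubd (proj2 (HBx e j)).
    by rewrite -[in RHS](gez0_abs (proj1 (HBx e j))).
  exact: HPe e.
have Hu : forall x : {ffun 'I_n -> F}, [forall j, x j != 0] ->
    forall t, Mz x (hi t) / Mz x (lo t) != 0.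
  by move=> x /forallP Hx t; rewrite mulf_neq0 // ?invr_neq0 // Mz_neq0.
have Hg : forall (x : {ffun 'I_n -> F}) (l : {ffun 'I_m -> F}), [forall j, x j != 0] ->
     (toric_eval P (cf hi lo l) x != 0) = [forall t, l t != Mz x (hi t) / Mz x (lo t)].
  move=> x l /forallP Hx; rewrite (@eval_cf F n P m hi lo d l x HBx Hlat Hx).
  apply/idP/idP => [/prodf_neq0 H|/forallP H].
    by apply/forallP => t; rewrite -fac_neq0 ?Mz_neq0 //; apply: H.
  by apply/prodf_neq0 => t _; rewrite fac_neq0 ?Mz_neq0 //; apply: H.
have [lam Hlam Hcnt] := count_lemma Hu Hg.
set c := cf hi lo lam.
have Hnz := cf_nz lam Hphi HBx Hlat.
have HN : (nzeros P c <= Nmax F P)%N by apply: leq_bigmax_cond.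
have Hsplit := card_split [set x : {ffun 'I_n -> F} | [forall j, x j != 0]]
   (fun x => toric_eval P c x == 0).
rewrite card_torus -nzeros_fin in Hsplit.
set W := #|_| in Hcnt.
set Z := Nmax F P in HN *.
set N := #|F|.-1 in Hcnt Hsplit *.
have key : (((N ^ n)%N%:R - Z%:R) * (N ^ m)%N%:R <= ((N ^ n) * (N.-1 ^ m))%N%:R :> Rdefinitions.R).
  apply: (le_trans (y := (W * N ^ m)%N%:R)); last by rewrite ler_nat.
  rewrite natrM ler_wpM2r // lerBlDr -natrD ler_nat.
  by rewrite -Hsplit addnC leq_add2l.
rewrite /delta -/Z -/N expr_div_n -!natrX ler_pdivrMr ?ltr0n ?expn_gt0 ?d0 //.
rewrite mulrAC ler_pdivlMr ?ltr0n ?expn_gt0 ?d0 // mulrC -natrM mulnC.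
by rewrite mulrC; exact: key.
Qed.

From mathcomp Require Import lra.
Local Open Scope classical_set_scope.
Module Aux.
Import numFieldNormedType.Exports.
Lemma lim_zero (R : realType) (u : nat -> R) (d rho : R) :
  u @ \oo --> d -> 0 <= d -> 0 <= rho -> rho < 1 ->
  (forall B N0, exists i, (N0 <= i)%N /\ u i <= rho ^+ B) -> d = 0.
Proof.
move=> Hdel d0 rho0 rho1 Hb.
case: (eqVneq d 0) => [//|dne]; exfalso.
have dpos : 0 < d by rewrite lt_neqAle eq_sym dne d0.
have d2 : 0 < d / 2 by rewrite divr_gt0.
move/cvgrPdist_lt: Hdel => /(_ (d / 2) d2) [N0 _ HN0].
have rhoN : `|rho| < 1 by rewrite ger0_norm.
move: (cvg_expr rhoN) => /cvgrPdist_lt /(_ (d / 2) d2) [B0 _ HB0].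
have [i [iN0 Hi]] := Hb B0 N0.
have H1 := HN0 i iN0.
have H2 := HB0 B0 (leqnn B0).
move: H1 H2 => /= H1 H2.
have H3 := ler_norm (d - u i).
rewrite sub0r normrN ger0_norm ?exprn_ge0 // in H2.
lra.
Qed.
End Aux.

Unset Implicit Arguments.
Set Strict Implicit.
Theorem mainTheorem14 (F : finFieldType) (n : nat -> nat)
    (P : forall i, ptope (n i)) :
  toric_family F P ->
  (forall B : nat, exists i, (B <= full_mink_length (P i))%N) ->
  (fun i => delta F (P i)) @ \oo --> (0 : Rdefinitions.R).
Proof.
move=> [Hfam [_ [d [r [/andP[d0 _] [_ [Hdel _]]]]]]] Hunb.
have F2 : (1 < #|F|)%N := card_finNzRing_gt1 F.
set N := #|F|.-1.
set rho : Rdefinitions.R := (N.-1)%:R / N%:R.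
have Npos : (0 < N)%N by rewrite /N; lia.
have rho0 : 0 <= rho by rewrite divr_ge0.
have rho1 : rho < 1.
  by rewrite /rho ltr_pdivrMr ?mul1r ?ltr_nat ?ltr0n // prednK.
have Hb : forall B N0, exists i, (N0 <= i)%N /\ delta F (P i) <= rho ^+ B.
  move=> B N0.
  set M := \max_(i < N0) full_mink_length (P i).
  have [i Hi] := Hunb (maxn B M.+1).
  have iN0 : (N0 <= i)%N.
    rewrite leqNgt; apply/negP => Hlt.
    have : (full_mink_length (P i) <= M)%N by apply: (leq_bigmax (Ordinal Hlt)).
    by move: Hi; rewrite geq_max => /andP [_ H1] H2; move: (leq_trans H1 H2); rewrite ltnn.
  exists i; split => //.
  have [lpP bP] := Hfam i.
  have bb : boxb (P i) (#|F| - 2) by move=> x Px j; have [h1 h2] := bP x Px j; rewrite h1 h2.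
  have Bpos : (0 < maxn B M.+1)%N by rewrite leq_max orbT.
  have [Q [m [Bm [sQ dQ]]]] := full_decomp lpP bb Bpos Hi.
  apply: (le_trans (delta_bound bP sQ dQ)).
  apply: ler_wiXn2l => //; first exact: ltW.
  exact: leq_trans (leq_maxl B M.+1) Bm.
have d00 : d = 0 := Aux.lim_zero Hdel d0 rho0 rho1 Hb.
by rewrite -d00.
Qed.
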